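(* There are absolute constants $c,C>0$ such that for every integer $k\ge2$ and infinitely many $n$, there is a $k$-monotone sequence $S_k\in[n]^n$ (of length $n$) with $\mathsf{F}^{k-1}(S_k)\ge c\,\frac{n}{k}\log(n/k)$ and $\mathsf{F}^{k}(S_k)\le C\,n$.
   Context: $\log(x)=\log_2(\max\{2,x\})$. A sequence $X\in[n]^m$ is $k$-monotone if it can be partitioned into $k$ (not necessarily contiguous) subsequences that are all increasing or all decreasing. $k$-finger cost: for a static BST $T$ on $[n]$, $d_T(a,b)$ is the number of edges between $a$ and $b$ in $T$. A $k$-finger strategy is an initial vector $\vec\ell\in[n]^k$ and $\vec f\in[k]^m$, finger $f_t$ serving $x_t$, with cost $\sum_{t=1}^m(1+d_T(x_t,p_t))$ where $p_t$ is the position of finger $f_t$ before time $t$ (its last served key, or $\ell_{f_t}$). $\mathsf{F}^k_T(X)$ is the minimum such cost and $\mathsf{F}^k(X)=\min_T\mathsf{F}^k_T(X)$ over BSTs $T$ on $[n]$. *)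

(* Defs.v *)
From Stdlib Require Import Reals Lia Arith List.
Import ListNotations.
Open Scope R_scope.

Definition plog (x : R) : R := ln (Rmax 2 x) / ln 2.

Inductive tree : Type :=
| Leaf : tree
| Node : tree -> nat -> tree -> tree.

Fixpoint inorder (t : tree) : list nat :=
  match t with
  | Leaf => []
  | Node l a r => inorder l ++ a :: inorder r
  end.

Definition is_BST_on (n : nat) (t : tree) : Prop := inorder t = seq 1 n.

Fixpoint search_path (t : tree) (a : nat) : list nat :=
  match t with
  | Leaf => []
  | Node l b r =>
      if Nat.eqb a b then [b]
      else if Nat.ltb a b then b :: search_path l a
      else b :: search_path r a
  end.

Fixpoint lcp (p q : list nat) : nat :=
  match p, q with
  | x :: p', y :: q' => if Nat.eqb x y then S (lcp p' q') else O
  | _, _ => O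
  end.

(* d_T(a,b): number of edges on the path between the nodes a and b of T. *)
Definition dist (t : tree) (a b : nat) : nat :=
  (length (search_path t a) + length (search_path t b)
   - 2 * lcp (search_path t a) (search_path t b))%nat.

Fixpoint finger_cost (t : tree) (pos : nat -> nat) (fs X : list nat) : nat :=
  match fs, X with
  | fi :: fs', x :: X' =>
      (1 + dist t x (pos fi)
       + finger_cost t (fun j => if Nat.eqb j fi then x else pos j) fs' X')%nat
  | _, _ => O
  end.

(* A k-finger strategy on a BST T on [n] for X: initial vector l in [n]^k and
   f in [k]^m (fingers indexed 0..k-1). *)
Definition valid_strategy (n k : nat) (X : list nat) (l fs : list nat) : Prop :=
  length l = k /\ (forall p, In p l -> (1 <= p <= n)%nat) /\
  length fs = length X /\ (forall i, In i fs -> (i < k)%nat).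

Definition attainable (n k : nat) (X : list nat) (c : nat) : Prop :=
  exists t l fs, is_BST_on n t /\ valid_strategy n k X l fs /\
    finger_cost t (fun i => nth i l O) fs X = c.

Definition is_Fk (n k : nat) (X : list nat) (v : nat) : Prop :=
  attainable n k X v /\ (forall c, attainable n k X c -> (v <= c)%nat).

Definition k_monotone (k : nat) (X : list nat) : Prop :=
  exists col : nat -> nat,
    (forall i, (i < length X)%nat -> (col i < k)%nat) /\
    ((forall i j, (i < j < length X)%nat -> col i = col j ->
        (nth i X O < nth j X O)%nat) \/
     (forall i j, (i < j < length X)%nat -> col i = col j ->
        (nth i X O > nth j X O)%nat)).

(* Main.v *)
Require Import Defs.
From Stdlib Require Import Reals List.
From Stdlib Require Import Reals Lia Lra Arith List Classical Sorted FinFun.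
Require Import Defs.
Import ListNotations.
Open Scope nat_scope.

Fixpoint bst (t : tree) : Prop :=
  match t with
  | Leaf => True
  | Node l a r => bst l /\ bst r /\ (forall x, In x (inorder l) -> x < a) /\
                  (forall x, In x (inorder r) -> a < x)
  end.

Lemma ss_app_inv : forall (l1 l2 : list nat), StronglySorted lt (l1 ++ l2) ->
  StronglySorted lt l1 /\ StronglySorted lt l2 /\ (forall x y, In x l1 -> In y l2 -> x < y).
Proof.
  induction l1 as [|a l1 IH]; intros l2 H; simpl in *.
  - repeat split; auto. constructor. intros x y [].
  - inversion H; subst. destruct (IH _ H2) as [A [B C]]. repeat split; auto.
    + constructor; auto. rewrite Forall_forall in *. intros x Hx. apply H3. apply in_or_app; auto.
    + intros x y [<-|Hx] Hy; auto. rewrite Forall_forall in H3. apply H3. apply in_or_app; auto.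
Qed.

Lemma ss_bst : forall t, StronglySorted lt (inorder t) -> bst t.
Proof.
  induction t as [|l IHl a r IHr]; simpl; intros H; auto.
  destruct (ss_app_inv _ _ H) as [A [B C]]. inversion B; subst.
  repeat split; auto.
  - intros x Hx. apply C; simpl; auto.
  - rewrite Forall_forall in H3. auto.
Qed.

Lemma ss_seq : forall n a, StronglySorted lt (seq a n).
Proof.
  induction n; intros a; simpl; constructor; auto.
  rewrite Forall_forall. intros x Hx. apply in_seq in Hx. lia.
Qed.

Lemma BST_bst : forall n t, is_BST_on n t -> bst t.
Proof. intros n t H. apply ss_bst. unfold is_BST_on in H. rewrite H. apply ss_seq. Qed.

Lemma sp_node : forall l a r x, search_path (Node l a r) x =
  if Nat.eqb x a then [a] else if Nat.ltb x a then a :: search_path l x else a :: search_path r x.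
Proof. reflexivity. Qed.

Lemma sp_head : forall l a r x, exists p, search_path (Node l a r) x = a :: p.
Proof. intros. rewrite sp_node. destruct (Nat.eqb x a); [|destruct (Nat.ltb x a)]; eauto. Qed.

Lemma sp_L : forall l a r x, x < a -> search_path (Node l a r) x = a :: search_path l x.
Proof. intros. rewrite sp_node. replace (Nat.eqb x a) with false by (symmetry; apply Nat.eqb_neq; lia).
  replace (Nat.ltb x a) with true by (symmetry; apply Nat.ltb_lt; lia). reflexivity. Qed.

Lemma sp_R : forall l a r x, a < x -> search_path (Node l a r) x = a :: search_path r x.
Proof. intros. rewrite sp_node. replace (Nat.eqb x a) with false by (symmetry; apply Nat.eqb_neq; lia).
  replace (Nat.ltb x a) with false by (symmetry; apply Nat.ltb_ge; lia). reflexivity. Qed.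

Lemma sp_root : forall l a r, search_path (Node l a r) a = [a].
Proof. intros. rewrite sp_node, Nat.eqb_refl. reflexivity. Qed.

Lemma lcp_comm : forall p q, lcp p q = lcp q p.
Proof. induction p; destruct q; simpl; auto. rewrite Nat.eqb_sym. destruct (Nat.eqb n a); auto. Qed.

Lemma tdist_sym : forall t x y, dist t x y = dist t y x.
Proof. intros. unfold dist. rewrite lcp_comm. lia. Qed.

Lemma lcp_le : forall p q, lcp p q <= length p.
Proof. induction p; destruct q; simpl; try lia. destruct (Nat.eqb a n); simpl; try lia. specialize (IHp q); lia. Qed.

Lemma lcp_le2 : forall p q, lcp p q <= length q.
Proof. intros. rewrite lcp_comm. apply lcp_le. Qed.

Lemma in_node : forall l a r x, In x (inorder (Node l a r)) <-> In x (inorder l) \/ x = a \/ In x (inorder r).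
Proof. intros. simpl. rewrite in_app_iff. simpl. intuition. Qed.

Lemma in_L : forall l a r x, bst (Node l a r) -> In x (inorder (Node l a r)) -> x < a -> In x (inorder l).
Proof. intros l a r x [_ [_ [_ H]]] Hin Hx. apply in_node in Hin. destruct Hin as [?|[?|?]]; auto; try lia.
  specialize (H _ H0); lia. Qed.

Lemma in_R : forall l a r x, bst (Node l a r) -> In x (inorder (Node l a r)) -> a < x -> In x (inorder r).
Proof. intros l a r x [_ [_ [H _]]] Hin Hx. apply in_node in Hin. destruct Hin as [?|[?|?]]; auto; try lia.
  specialize (H _ H0); lia. Qed.

Lemma lcp_same : forall a p q, lcp (a::p) (a::q) = S (lcp p q).
Proof. intros. simpl. rewrite Nat.eqb_refl. reflexivity. Qed.

Lemma lcp_diff : forall a b p q, a <> b -> lcp (a::p) (b::q) = 0.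
Proof. intros. simpl. replace (Nat.eqb a b) with false by (symmetry; apply Nat.eqb_neq; auto). reflexivity. Qed.

Lemma lcp_nil : forall a p, lcp (a::p) [] = 0.
Proof. reflexivity. Qed.

Lemma lcp_nil2 : forall a p, lcp [] (a::p) = 0.
Proof. reflexivity. Qed.

Lemma dist_LL : forall l a r x y, bst (Node l a r) -> In x (inorder l) -> In y (inorder l) ->
  dist (Node l a r) x y = dist l x y.
Proof. intros l a r x y [_ [_ [H _]]] Hx Hy. unfold dist.
  rewrite !sp_L by auto. rewrite lcp_same. cbn [length]. lia. Qed.

Lemma dist_RR : forall l a r x y, bst (Node l a r) -> In x (inorder r) -> In y (inorder r) ->
  dist (Node l a r) x y = dist r x y.
Proof. intros l a r x y [_ [_ [_ H]]] Hx Hy. unfold dist.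
  rewrite !sp_R by auto. rewrite lcp_same. cbn [length]. lia. Qed.

Lemma inorder_root : forall l b r, In b (inorder (Node l b r)).
Proof. intros. apply in_node. auto. Qed.

Lemma dist_Lx : forall l a r x y, bst (Node l a r) -> In x (inorder l) ->
  (y = a \/ In y (inorder r)) -> length (search_path l x) <= dist (Node l a r) x y.
Proof. intros l a r x y HB Hx Hy. pose proof HB as [_ [_ [H1 H2]]].
  unfold dist. rewrite (sp_L l a r x) by auto.
  destruct l as [|l1 b r1]; [simpl in Hx; contradiction|].
  destruct (sp_head l1 b r1 x) as [p Hp]. rewrite Hp.
  destruct Hy as [->|Hy].
  - rewrite sp_root. rewrite lcp_same. try rewrite lcp_nil; try rewrite lcp_nil2. cbn [length]. lia.
  - rewrite (sp_R _ a r y) by auto. destruct r as [|l2 c r2]; [simpl in Hy; contradiction|].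
    destruct (sp_head l2 c r2 y) as [q Hq]. rewrite Hq. rewrite lcp_same.
    assert (b < a) by (apply H1; apply inorder_root). assert (a < c) by (apply H2; apply inorder_root).
    rewrite lcp_diff by lia. cbn [length]. lia.
Qed.

Lemma dist_xR : forall l a r x y, bst (Node l a r) -> In y (inorder r) ->
  (x = a \/ In x (inorder l)) -> length (search_path r y) <= dist (Node l a r) x y.
Proof. intros l a r x y HB Hy Hx. pose proof HB as [_ [_ [H1 H2]]].
  unfold dist. rewrite (sp_R l a r y) by auto.
  destruct r as [|l2 c r2]; [simpl in Hy; contradiction|].
  destruct (sp_head l2 c r2 y) as [q Hq]. rewrite Hq.
  destruct Hx as [->|Hx].
  - rewrite sp_root. rewrite lcp_same. try rewrite lcp_nil; try rewrite lcp_nil2. cbn [length]. lia.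
  - rewrite (sp_L l a _ x) by auto. destruct l as [|l1 b r1]; [simpl in Hx; contradiction|].
    destruct (sp_head l1 b r1 x) as [p Hp]. rewrite Hp. rewrite lcp_same.
    assert (b < a) by (apply H1; apply inorder_root). assert (a < c) by (apply H2; apply inorder_root).
    rewrite lcp_diff by lia. cbn [length]. lia.
Qed.

Inductive subtree : tree -> tree -> Prop :=
| st_refl : forall t, subtree t t
| st_l : forall U l a r, subtree U l -> subtree U (Node l a r)
| st_r : forall U l a r, subtree U r -> subtree U (Node l a r).

Lemma subtree_keys : forall U T x, subtree U T -> In x (inorder U) -> In x (inorder T).
Proof. intros U T x H. induction H; intros Hx; auto; apply in_node; auto. Qed.

Lemma subtree_bst : forall U T, subtree U T -> bst T -> bst U.
Proof. intros U T H. induction H; simpl; intuition. Qed.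

Lemma subtree_len : forall U T x, subtree U T -> bst T -> In x (inorder U) ->
  length (search_path U x) <= length (search_path T x).
Proof.
  intros U T x H. induction H; intros HB Hx; auto.
  - pose proof HB as [Hl [_ [H1 _]]]. assert (x < a) by (apply H1; eapply subtree_keys; eauto).
    rewrite sp_L by auto. simpl. specialize (IHsubtree Hl Hx). lia.
  - pose proof HB as [_ [Hr [_ H2]]]. assert (a < x) by (apply H2; eapply subtree_keys; eauto).
    rewrite sp_R by auto. simpl. specialize (IHsubtree Hr Hx). lia.
Qed.

Lemma pow2_pos : forall d, 0 < 2 ^ d.
Proof. intros. apply Nat.neq_0_lt_0. apply Nat.pow_nonzero. lia. Qed.

Lemma split3 : forall a E, NoDup E ->
  length E <= S (length (filter (fun e => e <? a) E) + length (filter (fun e => a <? e) E)) /\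
  (~ In a E -> length E <= length (filter (fun e => e <? a) E) + length (filter (fun e => a <? e) E)).
Proof.
  intros a E H. induction H as [|x E Hx HN IH]; simpl; [lia|].
  destruct IH as [IH1 IH2].
  destruct (Nat.lt_trichotomy x a) as [Hl|[He|Hg]].
  - replace (x <? a) with true by (symmetry; apply Nat.ltb_lt; auto).
    replace (a <? x) with false by (symmetry; apply Nat.ltb_ge; lia). simpl. split; [lia|].
    intros Hn. assert (~ In a E) by tauto. specialize (IH2 H); lia.
  - subst. rewrite Nat.ltb_irrefl. simpl. split; [specialize (IH2 Hx); lia|]. intros Hn; tauto.
  - replace (x <? a) with false by (symmetry; apply Nat.ltb_ge; lia).
    replace (a <? x) with true by (symmetry; apply Nat.ltb_lt; auto). simpl. split; [lia|].
    intros Hn. assert (~ In a E) by tauto. specialize (IH2 H); lia.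
Qed.

Lemma ball : forall U, bst U -> forall d E, NoDup E ->
  (forall e, In e E -> In e (inorder U) /\ length (search_path U e) <= d) -> length E < 2 ^ d.
Proof.
  induction U as [|l IHl a r IHr]; intros HB d E HN HE.
  - destruct E as [|e E]; simpl. apply pow2_pos. destruct (HE e (or_introl eq_refl)) as [[] _].
  - pose proof HB as [Hl [Hr [H1 H2]]]. destruct d as [|d].
    + destruct E as [|e E]; simpl; [lia|]. destruct (HE e (or_introl eq_refl)) as [_ Hlen].
      destruct (sp_head l a r e) as [p Hp]. rewrite Hp in Hlen. simpl in Hlen. lia.
    + assert (A : length (filter (fun e => e <? a) E) < 2 ^ d).
      { apply IHl; auto. apply NoDup_filter; auto. intros e He. apply filter_In in He as [He Hlt].
        apply Nat.ltb_lt in Hlt. destruct (HE e He) as [Hin Hlen]. split. eapply in_L; eauto.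
        rewrite sp_L in Hlen by auto. simpl in Hlen. lia. }
      assert (B : length (filter (fun e => a <? e) E) < 2 ^ d).
      { apply IHr; auto. apply NoDup_filter; auto. intros e He. apply filter_In in He as [He Hlt].
        apply Nat.ltb_lt in Hlt. destruct (HE e He) as [Hin Hlen]. split. eapply in_R; eauto.
        rewrite sp_R in Hlen by auto. simpl in Hlen. lia. }
      destruct (split3 a E HN) as [C _]. rewrite Nat.pow_succ_r'. lia.
Qed.

Definition cross_ord (Ps : list (nat*nat)) : Prop :=
  forall p q, In p Ps -> In q Ps -> fst p < snd q /\ (fst p < fst q <-> snd p < snd q).

Lemma cross_incl : forall Ps Qs, incl Qs Ps -> cross_ord Ps -> cross_ord Qs.
Proof. unfold cross_ord. intros. apply H0; auto. Qed.

Definition goodU (T U : tree) (Ps : list (nat*nat)) : Prop :=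
  subtree U T /\
  (forall p, In p Ps ->
     (In (fst p) (inorder U) /\ length (search_path U (fst p)) <= S (dist T (fst p) (snd p))) \/
     (In (snd p) (inorder U) /\ length (search_path U (snd p)) <= S (dist T (fst p) (snd p)))) /\
  (Ps <> [] -> exists p0, In p0 Ps /\ forall z, fst p0 <= z <= snd p0 -> In z (inorder T) -> In z (inorder U)).

Lemma cross_U : forall T, bst T -> forall Ps, cross_ord Ps ->
  (forall p, In p Ps -> In (fst p) (inorder T) /\ In (snd p) (inorder T)) ->
  exists U, goodU T U Ps.
Proof.
  induction T as [|l IHl a r IHr]; intros HB Ps HC HK.
  - exists Leaf. split; [constructor|]. split.
    + intros p Hp. destruct (HK p Hp) as [[] _].
    + intros Hne. destruct Ps as [|p Ps]; [congruence|]. destruct (HK p (or_introl eq_refl)) as [[] _].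
  - pose proof HB as [Hl [Hr [H1 H2]]].
    set (PL := filter (fun p => snd p <? a) Ps).
    set (PR := filter (fun p => a <? fst p) Ps).
    assert (Hlt : forall p, In p Ps -> fst p < snd p) by (intros p Hp; apply (HC p p Hp Hp)).
    destruct (classic (PL = [])) as [EL|NL]; destruct (classic (PR = [])) as [ER|NR].
    +
      exists (Node l a r). split; [constructor|]. split.
      * intros p Hp. left. split; [apply HK; auto|].
        assert (Ha1 : fst p <= a).
        { destruct (Nat.le_gt_cases (fst p) a) as [?|G]; auto. exfalso.
          assert (In p PR) by (apply filter_In; split; auto; apply Nat.ltb_lt; auto). rewrite ER in H; inversion H. }
        assert (Ha2 : a <= snd p).
        { destruct (Nat.le_gt_cases a (snd p)) as [?|G]; auto. exfalso.
          assert (In p PL) by (apply filter_In; split; auto; apply Nat.ltb_lt; auto). rewrite EL in H; inversion H. }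
        destruct (HK p Hp) as [Kx Ky].
        destruct (Nat.eq_dec (fst p) a) as [Eq|Ne].
        -- rewrite Eq, sp_root. simpl. lia.
        -- rewrite sp_L by lia. simpl. apply le_n_S.
           apply dist_Lx; auto. eapply in_L; eauto; lia.
           destruct (Nat.eq_dec (snd p) a); auto. right. eapply in_R; eauto; lia.
      * intros Hne. destruct Ps as [|p Ps]; [congruence|]. exists p. split; simpl; auto.
    +
      assert (HCR : cross_ord PR) by (eapply cross_incl; eauto; intros x Hx; apply filter_In in Hx; tauto).
      assert (HKR : forall p, In p PR -> In (fst p) (inorder r) /\ In (snd p) (inorder r)).
      { intros p Hp. apply filter_In in Hp as [Hp Hq]. apply Nat.ltb_lt in Hq. specialize (Hlt p Hp).
        destruct (HK p Hp). split; eapply in_R; eauto; lia. }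
      destruct (IHr Hr PR HCR HKR) as [U [HS [HU HI]]].
      exists U. split; [apply st_r; auto|]. split.
      * intros p Hp. destruct (Nat.lt_ge_cases a (fst p)) as [G|G].
        -- assert (HpR : In p PR) by (apply filter_In; split; auto; apply Nat.ltb_lt; auto).
           destruct (HKR p HpR) as [Kx Ky]. rewrite dist_RR by auto. apply HU; auto.
        -- right. destruct (HI NR) as [p0 [Hp0 Hz]].
           assert (Hp0' : In p0 Ps /\ a < fst p0) by (apply filter_In in Hp0 as [? Q]; apply Nat.ltb_lt in Q; auto).
           destruct Hp0' as [Hp0P Ha0].
           destruct (HC p p0 Hp Hp0P) as [X1 X2]. destruct (HC p0 p Hp0P Hp) as [X3 _].
           assert (snd p < snd p0) by (apply X2; lia).
           destruct (HK p Hp) as [Kx Ky].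
           assert (Yr : In (snd p) (inorder r)) by (eapply in_R; eauto; lia).
           split. apply Hz; auto; lia.
           eapply Nat.le_trans. eapply subtree_len with (T := r); eauto. apply Hz; auto; lia.
           apply le_S. apply dist_xR; auto.
           destruct (Nat.eq_dec (fst p) a); auto. right. eapply in_L; eauto; lia.
      * intros _. destruct (HI NR) as [p0 [Hp0 Hz]]. exists p0. split.
        apply filter_In in Hp0; tauto.
        intros z Hz1 Hz2. apply Hz; auto. apply filter_In in Hp0 as [Hp0 Q]. apply Nat.ltb_lt in Q.
        eapply in_R; eauto; lia.
    +
      assert (HCL : cross_ord PL) by (eapply cross_incl; eauto; intros x Hx; apply filter_In in Hx; tauto).
      assert (HKL : forall p, In p PL -> In (fst p) (inorder l) /\ In (snd p) (inorder l)).
      { intros p Hp. apply filter_In in Hp as [Hp Hq]. apply Nat.ltb_lt in Hq. specialize (Hlt p Hp).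
        destruct (HK p Hp). split; eapply in_L; eauto; lia. }
      destruct (IHl Hl PL HCL HKL) as [U [HS [HU HI]]].
      exists U. split; [apply st_l; auto|]. split.
      * intros p Hp. destruct (Nat.lt_ge_cases (snd p) a) as [G|G].
        -- assert (HpL : In p PL) by (apply filter_In; split; auto; apply Nat.ltb_lt; auto).
           destruct (HKL p HpL) as [Kx Ky]. rewrite dist_LL by auto. apply HU; auto.
        -- left. destruct (HI NL) as [p0 [Hp0 Hz]].
           assert (Hp0' : In p0 Ps /\ snd p0 < a) by (apply filter_In in Hp0 as [? Q]; apply Nat.ltb_lt in Q; auto).
           destruct Hp0' as [Hp0P Ha0].
           destruct (HC p0 p Hp0P Hp) as [X1 X2]. destruct (HC p p0 Hp Hp0P) as [X3 _].
           assert (fst p0 < fst p) by (apply X2; lia).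
           destruct (HK p Hp) as [Kx Ky].
           assert (Xl : In (fst p) (inorder l)) by (eapply in_L; eauto; lia).
           split. apply Hz; auto; lia.
           eapply Nat.le_trans. eapply subtree_len with (T := l); eauto. apply Hz; auto; lia.
           apply le_S. apply dist_Lx; auto.
           destruct (Nat.eq_dec (snd p) a); auto. right. eapply in_R; eauto; lia.
      * intros _. destruct (HI NL) as [p0 [Hp0 Hz]]. exists p0. split.
        apply filter_In in Hp0; tauto.
        intros z Hz1 Hz2. apply Hz; auto. apply filter_In in Hp0 as [Hp0 Q]. apply Nat.ltb_lt in Q.
        eapply in_L; eauto; lia.
    + exfalso. destruct PL as [|pl PL'] eqn:EPL; [congruence|]. destruct PR as [|pr PR'] eqn:EPR; [congruence|].
      assert (A1 : In pl PL) by (rewrite EPL; left; auto). assert (A2 : In pr PR) by (rewrite EPR; left; auto).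
      unfold PL, PR in A1, A2. apply filter_In in A1 as [A1 B1]. apply filter_In in A2 as [A2 B2].
      apply Nat.ltb_lt in B1. apply Nat.ltb_lt in B2. destruct (HC pr pl A2 A1). lia.
Qed.

Lemma choose_E : forall (good : nat -> Prop) Ps, cross_ord Ps -> NoDup (map fst Ps) ->
  (forall p, In p Ps -> good (fst p) \/ good (snd p)) ->
  exists E, length E = length Ps /\ NoDup E /\ (forall e, In e E -> good e) /\
    (forall e, In e E -> exists q, In q Ps /\ (e = fst q \/ e = snd q)).
Proof.
  intros good Ps. induction Ps as [|p Ps IH]; intros HC HN HG.
  - exists []. split; [reflexivity|]. split; [constructor|]. split; intros e [].
  - simpl in HN. inversion HN as [|? ? Hnin HN']; subst.
    assert (HC' : cross_ord Ps) by (eapply cross_incl; eauto; intros x Hx; right; auto).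
    destruct (IH HC' HN' (fun q Hq => HG q (or_intror Hq))) as [E [HL [HNE [HGE HQ]]]].
    assert (Hnot : forall e, (e = fst p \/ e = snd p) -> ~ In e E).
    { intros e He Hin. destruct (HQ e Hin) as [q [Hq Hq']].
      assert (Hfq : fst q <> fst p) by (intros Eq; apply Hnin; rewrite <- Eq; apply in_map; auto).
      destruct (HC p q (or_introl eq_refl) (or_intror Hq)) as [A1 A2].
      destruct (HC q p (or_intror Hq) (or_introl eq_refl)) as [A3 A4].
      destruct He as [E1|E1]; subst e; destruct Hq' as [Q|Q]; try lia. }
    destruct (HG p (or_introl eq_refl)) as [G|G].
    + exists (fst p :: E). simpl. repeat split; auto.
      * constructor; auto.
      * intros e [<-|He]; auto.
      * intros e [<-|He]. exists p; auto. destruct (HQ e He) as [q [? ?]]. exists q; auto.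
    + exists (snd p :: E). simpl. repeat split; auto.
      * constructor; auto.
      * intros e [<-|He]; auto.
      * intros e [<-|He]. exists p; auto. destruct (HQ e He) as [q [? ?]]. exists q; auto.
Qed.

Lemma cross_count : forall T Ps d, bst T -> cross_ord Ps -> NoDup (map fst Ps) ->
  (forall p, In p Ps -> In (fst p) (inorder T) /\ In (snd p) (inorder T)) ->
  (forall p, In p Ps -> dist T (fst p) (snd p) < d) -> length Ps < 2 ^ d.
Proof.
  intros T Ps d HB HC HN HK HD.
  destruct (cross_U T HB Ps HC HK) as [U [HS [HU _]]].
  destruct (choose_E (fun e => In e (inorder U) /\ length (search_path U e) <= d) Ps HC HN) as [E [HL [HNE [HG _]]]].
  - intros p Hp. specialize (HD p Hp). destruct (HU p Hp) as [[A B]|[A B]]; [left|right]; split; auto; lia.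
  - rewrite <- HL. apply (ball U (subtree_bst U T HS HB) d E HNE HG).
Qed.

Definition upd (pos : nat -> nat) (f x : nat) := fun j => if Nat.eqb j f then x else pos j.

Lemma fc_cons : forall t pos f fs x X,
  finger_cost t pos (f :: fs) (x :: X) = 1 + dist t x (pos f) + finger_cost t (upd pos f x) fs X.
Proof. reflexivity. Qed.

Lemma first_occ : forall t j fs X pos f, length fs = length X -> j < length fs ->
  nth j fs 0 = f -> (forall i, i < j -> nth i fs 0 <> f) ->
  dist t (nth j X 0) (pos f) <= finger_cost t pos fs X.
Proof.
  intros t j. induction j as [|j IH]; intros fs X pos f HL Hj Hn Hi.
  - destruct fs as [|g fs]; simpl in Hj; [lia|]. destruct X as [|x X]; simpl in HL; [lia|].
    simpl in Hn. subst. rewrite fc_cons. simpl. lia.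
  - destruct fs as [|g fs]; simpl in Hj; [lia|]. destruct X as [|x X]; simpl in HL; [lia|].
    rewrite fc_cons. simpl.
    assert (Hg : g <> f) by (apply (Hi 0); lia).
    assert (E : upd pos g x f = pos f) by (unfold upd; replace (Nat.eqb f g) with false by (symmetry; apply Nat.eqb_neq; auto); auto).
    rewrite <- E. eapply Nat.le_trans; [apply (IH fs X (upd pos g x) f)|]; try lia; auto.
    intros i Hi'. apply (Hi (S i)). lia.
Qed.

Lemma first_index : forall f l, In f l -> exists j, j < length l /\ nth j l 0 = f /\ forall i, i < j -> nth i l 0 <> f.
Proof.
  intros f l. induction l as [|g l IH]; intros H; [destruct H|].
  destruct (Nat.eq_dec g f) as [E|E].
  - exists 0. simpl. split; [lia|]. split; auto. intros; lia.
  - destruct H as [H|H]; [congruence|]. destruct (IH H) as [j [A [B C]]].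
    exists (S j). simpl. split; [lia|]. split; auto. intros [|i] Hi; auto. apply C. lia.
Qed.

Lemma dup_cost : forall t fs X pos, length fs = length X -> ~ NoDup fs ->
  exists i j, i < j < length X /\ dist t (nth j X 0) (nth i X 0) <= finger_cost t pos fs X.
Proof.
  intros t fs. induction fs as [|f fs IH]; intros X pos HL HN.
  - exfalso. apply HN. constructor.
  - destruct X as [|x X]; simpl in HL; [lia|]. rewrite fc_cons.
    destruct (classic (In f fs)) as [Hin|Hin].
    + destruct (first_index f fs Hin) as [j [A [B C]]].
      pose proof (first_occ t j fs X (upd pos f x) f ltac:(lia) A B C) as Hf.
      assert (Ux : upd pos f x f = x) by (unfold upd; rewrite Nat.eqb_refl; auto). rewrite Ux in Hf.
      exists 0, (S j). simpl. split; [lia|]. lia.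
    + assert (~ NoDup fs) by (intros N; apply HN; constructor; auto).
      destruct (IH X (upd pos f x) ltac:(lia) H) as [i [j [A B]]].
      exists (S i), (S j). simpl. split; [lia|]. lia.
Qed.

Lemma pigeon : forall fs K, NoDup fs -> (forall f, In f fs -> f < K) -> length fs <= K.
Proof.
  intros fs K HN HF. rewrite <- (length_seq K 0). apply NoDup_incl_length; auto.
  intros f Hf. apply in_seq. specialize (HF f Hf). lia.
Qed.

Definition round (k m i : nat) := map (fun a => a * m + i + 1) (seq 0 k).
Definition Sseq (k m i0 r : nat) := flat_map (round k m) (seq i0 r).

Lemma round_len : forall k m i, length (round k m i) = k.
Proof. intros. unfold round. rewrite length_map, length_seq. auto. Qed.

Lemma round_nth : forall k m i a, a < k -> nth a (round k m i) 0 = a * m + i + 1.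
Proof. intros. unfold round. set (f := fun a => a * m + i + 1).
  transitivity (nth a (map f (seq 0 k)) (f 0)). apply nth_indep. rewrite length_map, length_seq; auto.
  rewrite map_nth, seq_nth by auto. auto. Qed.

Lemma round_lower : forall t k m i pos fs, 1 <= k -> length fs = k -> (forall f, In f fs -> f < k - 1) ->
  exists a b, a < b < k /\ dist t (a * m + i + 1) (b * m + i + 1) <= finger_cost t pos fs (round k m i).
Proof.
  intros t k m i pos fs Hk HL HF.
  assert (~ NoDup fs) by (intros N; pose proof (pigeon fs (k-1) N HF); lia).
  destruct (dup_cost t fs (round k m i) pos ltac:(rewrite round_len; auto) H) as [a [b [A B]]].
  rewrite round_len in A. rewrite !round_nth in B by lia.
  exists a, b. split; auto. rewrite tdist_sym. auto.
Qed.

Lemma fc_app : forall t fs1 X1 fs2 X2 pos, length fs1 = length X1 ->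
  exists pos', finger_cost t pos (fs1 ++ fs2) (X1 ++ X2) = finger_cost t pos fs1 X1 + finger_cost t pos' fs2 X2.
Proof.
  intros t fs1. induction fs1 as [|f fs1 IH]; intros X1 fs2 X2 pos HL.
  - destruct X1; simpl in HL; [|lia]. exists pos. reflexivity.
  - destruct X1 as [|x X1]; simpl in HL; [lia|]. simpl app. rewrite !fc_cons.
    destruct (IH X1 fs2 X2 (upd pos f x) ltac:(lia)) as [p' E]. exists p'. rewrite E. lia.
Qed.

Lemma Sseq_len : forall k m r i0, length (Sseq k m i0 r) = r * k.
Proof. intros k m r. induction r; intros i0; simpl; auto. unfold Sseq in *. simpl. rewrite length_app, round_len, IHr. lia. Qed.

Lemma Sseq_S : forall k m i0 r, Sseq k m i0 (S r) = round k m i0 ++ Sseq k m (S i0) r.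
Proof. reflexivity. Qed.

Definition zx (m : nat) (z : nat * (nat * nat)) := fst (snd z) * m + fst z + 1.
Definition zy (m : nat) (z : nat * (nat * nat)) := snd (snd z) * m + fst z + 1.

Lemma rounds_lower : forall t k m r i0 pos fs, 1 <= k -> length fs = r * k -> (forall f, In f fs -> f < k - 1) ->
  exists Z : list (nat * (nat * nat)), map fst Z = seq i0 r /\
    (forall z, In z Z -> fst (snd z) < snd (snd z) < k) /\
    list_sum (map (fun z => dist t (zx m z) (zy m z)) Z) <= finger_cost t pos fs (Sseq k m i0 r).
Proof.
  intros t k m r. induction r as [|r IH]; intros i0 pos fs Hk HL HF.
  - exists []. simpl. split; [reflexivity|]. split; [intros z0 []|]. lia.
  - rewrite Sseq_S. rewrite <- (firstn_skipn k fs).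
    assert (L1 : length (firstn k fs) = k) by (rewrite length_firstn; simpl in HL; lia).
    destruct (fc_app t (firstn k fs) (round k m i0) (skipn k fs) (Sseq k m (S i0) r) pos ltac:(rewrite round_len; auto)) as [p' E].
    rewrite E.
    destruct (round_lower t k m i0 pos (firstn k fs) Hk L1) as [a [b [Hab Hd]]].
    { intros f Hf. apply HF. rewrite <- (firstn_skipn k fs). apply in_or_app; auto. }
    destruct (IH (S i0) p' (skipn k fs) Hk) as [Z [Z1 [Z2 Z3]]].
    { rewrite length_skipn. simpl in HL. lia. }
    { intros f Hf. apply HF. rewrite <- (firstn_skipn k fs). apply in_or_app; auto. }
    exists ((i0, (a, b)) :: Z). simpl map. rewrite Z1. split; [reflexivity|]. split.
    + intros z [Ez|Hz]; [subst z; simpl; lia|auto].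
    + unfold zx at 1, zy at 1. simpl. lia.
Qed.

Lemma filter_split {A} (f : A -> bool) l :
  length l = length (filter f l) + length (filter (fun x => negb (f x)) l).
Proof. induction l as [|x l IH]; simpl; auto. destruct (f x); simpl; lia. Qed.

Lemma filter_filter_le {A} (f g : A -> bool) l : length (filter f (filter g l)) <= length (filter f l).
Proof. induction l as [|x l IH]; simpl; auto. destruct (g x); simpl; destruct (f x); simpl; lia. Qed.

Lemma sum_ge {A} (g : A -> nat) d l : d * length (filter (fun z => d <=? g z) l) <= list_sum (map g l).
Proof. induction l as [|x l IH]; simpl; [lia|]. destruct (Nat.leb_spec d (g x)); simpl; lia. Qed.

Definition peqb (p q : nat * nat) := andb (Nat.eqb (fst p) (fst q)) (Nat.eqb (snd p) (snd q)).
Lemma peqb_iff : forall p q, peqb p q = true <-> p = q.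
Proof. intros [a b] [c d]. unfold peqb. simpl. rewrite Bool.andb_true_iff, !Nat.eqb_eq. split.
  intros [-> ->]; auto. intros H; inversion H; auto. Qed.

Lemma type_count {A} : forall types (l : list A) h B, (forall x, In x l -> In (h x) types) ->
  (forall tau, In tau types -> length (filter (fun x => peqb (h x) tau) l) <= B) ->
  length l <= length types * B.
Proof.
  induction types as [|tau ts IH]; intros l h B H1 H2.
  - destruct l as [|x l]; simpl; auto. destruct (H1 x (or_introl eq_refl)).
  - rewrite (filter_split (fun x => peqb (h x) tau) l). simpl.
    assert (A1 := H2 tau (or_introl eq_refl)).
    assert (A2 : length (filter (fun x => negb (peqb (h x) tau)) l) <= length ts * B).
    { apply (IH _ h).
      - intros x Hx. apply filter_In in Hx as [Hx Hn]. destruct (H1 x Hx) as [E|E]; auto.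
        exfalso. rewrite E in Hn. assert (peqb (h x) (h x) = true) by (apply peqb_iff; auto).
        rewrite H in Hn. discriminate.
      - intros tau' Ht. eapply Nat.le_trans; [apply filter_filter_le|]. apply H2. right; auto. }
    lia.
Qed.

Lemma NoDup_map_filter {A B} (h : A -> B) f l : NoDup (map h l) -> NoDup (map h (filter f l)).
Proof.
  induction l; simpl; intros H; auto. inversion H; subst. destruct (f a); simpl; auto.
  constructor; auto. intros Hin. apply H2. apply in_map_iff in Hin as [x [Ex Hx]].
  apply filter_In in Hx. rewrite <- Ex. apply in_map. tauto.
Qed.

Lemma count_bad : forall t k m d Z, bst t -> inorder t = seq 1 (k * m) ->
  map fst Z = seq 0 m -> (forall z, In z Z -> fst (snd z) < snd (snd z) < k) ->
  length (filter (fun z => dist t (zx m z) (zy m z) <? d) Z) <= k * k * 2 ^ d.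
Proof.
  intros t k m d Z HB HI HZ HT.
  assert (Hj : forall z, In z Z -> fst z < m).
  { intros z Hz. assert (In (fst z) (seq 0 m)) by (rewrite <- HZ; apply in_map; auto). apply in_seq in H. lia. }
  replace (k * k) with (length (list_prod (seq 0 k) (seq 0 k))) by (rewrite length_prod, length_seq; auto).
  apply type_count with (h := snd).
  - intros z Hz. apply filter_In in Hz as [Hz _]. destruct (HT z Hz). destruct (snd z) as [a b]. simpl in *.
    apply in_prod; apply in_seq; lia.
  - intros [a b] Htau. apply in_prod_iff in Htau as [Ha Hb]. apply in_seq in Ha, Hb.
    set (F := filter (fun x => peqb (snd x) (a, b)) (filter (fun z => dist t (zx m z) (zy m z) <? d) Z)).
    assert (HF : forall z, In z F -> In z Z /\ snd z = (a, b) /\ dist t (zx m z) (zy m z) < d).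
    { intros z Hz. unfold F in Hz. apply filter_In in Hz as [Hz E]. apply filter_In in Hz as [Hz D].
      apply peqb_iff in E. apply Nat.ltb_lt in D. auto. }
    apply Nat.lt_le_incl.
    replace (length F) with (length (map (fun z => (zx m z, zy m z)) F)) by apply length_map.
    apply (cross_count t); auto.
    + intros p q Hp Hq. apply in_map_iff in Hp as [z [Ez Hz]]. apply in_map_iff in Hq as [z' [Ez' Hz']].
      subst p q. destruct (HF z Hz) as [Z1 [Z2 _]]. destruct (HF z' Hz') as [Z1' [Z2' _]].
      pose proof (HT z Z1) as T1. pose proof (Hj z Z1). pose proof (Hj z' Z1').
      rewrite Z2 in T1. simpl in T1. unfold zx, zy. simpl. rewrite Z2, Z2'. simpl.
      split; [|lia]. nia.
    + rewrite map_map.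
      replace (map (fun x => fst (zx m x, zy m x)) F) with (map (fun j => a * m + j + 1) (map fst F)).
      * apply FinFun.Injective_map_NoDup. intros x y E; lia.
        unfold F. apply NoDup_map_filter. apply NoDup_map_filter. rewrite HZ. apply seq_NoDup.
      * rewrite map_map. apply map_ext_in. intros z Hz. destruct (HF z Hz) as [_ [Z2 _]].
        unfold zx. simpl. rewrite Z2. reflexivity.
    + intros p Hp. apply in_map_iff in Hp as [z [Ez Hz]]. subst p. destruct (HF z Hz) as [Z1 [Z2 _]].
      pose proof (HT z Z1) as T1. pose proof (Hj z Z1). rewrite Z2 in T1. simpl in T1.
      unfold zx, zy. simpl. rewrite Z2. simpl. rewrite HI. split; apply in_seq; nia.
    + intros p Hp. apply in_map_iff in Hp as [z [Ez Hz]]. subst p. apply HF; auto.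
Qed.

Lemma lower_bound : forall k m d c, 2 <= k -> attainable (k * m) (k - 1) (Sseq k m 0 m) c ->
  d * (m - k * k * 2 ^ d) <= c.
Proof.
  intros k m d c Hk [t [l [fs [HBST [[Hl [Hlr [Hfs Hfk]]] Hc]]]]].
  pose proof (BST_bst _ _ HBST) as HB.
  rewrite Sseq_len in Hfs.
  destruct (rounds_lower t k m m 0 (fun i => nth i l O) fs ltac:(lia) Hfs Hfk) as [Z [Z1 [Z2 Z3]]].
  rewrite Hc in Z3.
  pose proof (count_bad t k m d Z HB HBST Z1 Z2) as C.
  pose proof (sum_ge (fun z => dist t (zx m z) (zy m z)) d Z) as S.
  pose proof (filter_split (fun z => dist t (zx m z) (zy m z) <? d) Z) as F.
  assert (LZ : length Z = m) by (rewrite <- (length_seq m 0), <- Z1, length_map; auto).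
  rewrite (filter_ext (fun z => d <=? dist t (zx m z) (zy m z)) (fun z => negb (dist t (zx m z) (zy m z) <? d))) in S
    by (intros z; apply Nat.leb_antisym).
  cbv beta in F. assert (m - k * k * 2 ^ d <= length (filter (fun z => negb (dist t (zx m z) (zy m z) <? d)) Z)) by lia.
  eapply Nat.le_trans; [|apply Z3]. eapply Nat.le_trans; [|apply S]. apply Nat.mul_le_mono_l. auto.
Qed.

Fixpoint ptree (lo n : nat) : tree :=
  match n with 0 => Leaf | S n' => Node Leaf lo (ptree (S lo) n') end.

Lemma ptree_inorder : forall n lo, inorder (ptree lo n) = seq lo n.
Proof. induction n; intros lo; simpl; auto. rewrite IHn. auto. Qed.

Lemma ptree_sp : forall n lo x, lo <= x < lo + n -> search_path (ptree lo n) x = seq lo (S (x - lo)).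
Proof.
  induction n; intros lo x H; [lia|]. simpl ptree.
  destruct (Nat.eq_dec x lo) as [->|Ne].
  - rewrite sp_root. rewrite Nat.sub_diag. reflexivity.
  - rewrite sp_R by lia. rewrite IHn by lia.
    replace (S (x - lo)) with (S (S (x - S lo))) by lia. reflexivity.
Qed.

Lemma lcp_seq : forall a b lo, lcp (seq lo a) (seq lo b) = Nat.min a b.
Proof. induction a; destruct b; intros lo; simpl; auto. rewrite Nat.eqb_refl. rewrite IHa. auto. Qed.

Lemma ptree_dist : forall n x y, 1 <= x <= n -> 1 <= y <= n -> dist (ptree 1 n) x y = (x - y) + (y - x).
Proof.
  intros n x y Hx Hy. unfold dist. rewrite !ptree_sp by lia. rewrite lcp_seq, !length_seq. lia.
Qed.

Lemma round_cost : forall n k m i len j pos, i < m -> j + len <= k -> k * m <= n ->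
  (forall a, j <= a < j + len -> 1 <= pos a <= n /\ (a * m + i + 1) - pos a + (pos a - (a * m + i + 1)) <= 1) ->
  finger_cost (ptree 1 n) pos (seq j len) (map (fun a => a * m + i + 1) (seq j len)) <= 2 * len.
Proof.
  intros n k m i len. induction len as [|len IH]; intros j pos Hi Hj Hn H; simpl; [lia|].
  destruct (H j ltac:(lia)) as [P1 P2].
  assert (Hkey : j * m + i + 1 <= n) by nia.
  rewrite ptree_dist by lia.
  assert (finger_cost (ptree 1 n) (upd pos j (j * m + i + 1)) (seq (S j) len)
            (map (fun a => a * m + i + 1) (seq (S j) len)) <= 2 * len).
  { apply (IH (S j)); auto; try lia. intros a Ha. unfold upd.
    replace (Nat.eqb a j) with false by (symmetry; apply Nat.eqb_neq; lia). apply H. lia. }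
  unfold upd in H0. lia.
Qed.

Lemma fc_ext : forall t fs X pos pos', (forall a, pos a = pos' a) ->
  finger_cost t pos fs X = finger_cost t pos' fs X.
Proof.
  intros t fs. induction fs as [|f fs IH]; intros X pos pos' H; destruct X as [|x X]; simpl; auto.
  rewrite H. f_equal. f_equal. apply IH. intros a. destruct (Nat.eqb a f); auto.
Qed.

Lemma fc_round_app : forall t g len j pos fs2 X2, exists pos',
  (forall a, pos' a = if andb (j <=? a) (a <? j + len) then g a else pos a) /\
  finger_cost t pos (seq j len ++ fs2) (map g (seq j len) ++ X2) =
  finger_cost t pos (seq j len) (map g (seq j len)) + finger_cost t pos' fs2 X2.
Proof.
  intros t g len. induction len as [|len IH]; intros j pos fs2 X2.
  - exists pos. split; auto. intros a. destruct (Nat.leb_spec j a); destruct (Nat.ltb_spec a (j + 0)); simpl; auto; lia.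
  - cbn [seq map app]. destruct (IH (S j) (upd pos j (g j)) fs2 X2) as [p' [H1 H2]].
    exists p'. split.
    + intros a. rewrite H1. unfold upd.
      destruct (Nat.leb_spec (S j) a); destruct (Nat.ltb_spec a (S j + len));
      destruct (Nat.leb_spec j a); destruct (Nat.ltb_spec a (j + S len)); destruct (Nat.eqb_spec a j);
      simpl; subst; auto; lia.
    + rewrite !fc_cons. rewrite H2. lia.
Qed.

Definition fsk (k m : nat) := flat_map (fun _ => seq 0 k) (seq 0 m).

Lemma upper_rounds : forall k m r i0 pos, 1 <= k -> i0 + r <= m ->
  (forall a, a < k -> pos a = a * m + Nat.max 1 i0) ->
  finger_cost (ptree 1 (k * m)) pos (flat_map (fun _ => seq 0 k) (seq i0 r)) (Sseq k m i0 r) <= 2 * k * r.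
Proof.
  intros k m r. induction r as [|r IH]; intros i0 pos Hk Hr Hp; [simpl; lia|].
  rewrite Sseq_S. simpl flat_map. unfold round.
  destruct (fc_round_app (ptree 1 (k * m)) (fun a => a * m + i0 + 1) k 0 pos
     (flat_map (fun _ => seq 0 k) (seq (S i0) r)) (Sseq k m (S i0) r)) as [p' [H1 H2]].
  rewrite H2.
  assert (A : finger_cost (ptree 1 (k * m)) pos (seq 0 k) (map (fun a => a * m + i0 + 1) (seq 0 k)) <= 2 * k).
  { apply (round_cost (k * m) k m i0 k 0 pos); try lia. intros a Ha. rewrite Hp by lia. split; [|lia].
    split; [lia|]. assert (a * m + m <= k * m) by nia. lia. }
  assert (B : finger_cost (ptree 1 (k * m)) p' (flat_map (fun _ => seq 0 k) (seq (S i0) r)) (Sseq k m (S i0) r) <= 2 * k * r).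
  { apply IH; try lia. intros a Ha. rewrite H1. destruct (Nat.leb_spec 0 a); destruct (Nat.ltb_spec a (0 + k)); simpl; lia. }
  lia.
Qed.

Lemma fsk_len : forall k r i0, length (flat_map (fun _ : nat => seq 0 k) (seq i0 r)) = r * k.
Proof. intros k r. induction r; intros i0; simpl; auto. rewrite length_app, length_seq, IHr. lia. Qed.

Lemma upper_att : forall k m, 1 <= k -> 1 <= m ->
  attainable (k * m) k (Sseq k m 0 m) (finger_cost (ptree 1 (k * m)) (fun i => nth i (map (fun a => a * m + 1) (seq 0 k)) O)
     (flat_map (fun _ => seq 0 k) (seq 0 m)) (Sseq k m 0 m)).
Proof.
  intros k m Hk Hm. exists (ptree 1 (k * m)), (map (fun a => a * m + 1) (seq 0 k)), (flat_map (fun _ => seq 0 k) (seq 0 m)).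
  split; [unfold is_BST_on; apply ptree_inorder|]. split; [|reflexivity].
  split; [rewrite length_map, length_seq; auto|]. split.
  - intros p Hp. apply in_map_iff in Hp as [a [<- Ha]]. apply in_seq in Ha. nia.
  - split. rewrite fsk_len, Sseq_len; auto. intros i Hi. apply in_flat_map in Hi as [x [_ Hi]]. apply in_seq in Hi. lia.
Qed.

Lemma upper_cost : forall k m, 1 <= k ->
  finger_cost (ptree 1 (k * m)) (fun i => nth i (map (fun a => a * m + 1) (seq 0 k)) O)
     (flat_map (fun _ => seq 0 k) (seq 0 m)) (Sseq k m 0 m) <= 2 * (k * m).
Proof.
  intros k m Hk. eapply Nat.le_trans. apply upper_rounds; try lia.
  intros a Ha. set (f := fun a => a * m + 1).
  transitivity (nth a (map f (seq 0 k)) (f 0)). apply nth_indep. rewrite length_map, length_seq; auto.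
  rewrite map_nth, seq_nth by auto. unfold f. simpl. lia. lia.
Qed.

Lemma Sseq_nth : forall k m r i0 i a, i < r -> a < k -> nth (i * k + a) (Sseq k m i0 r) 0 = a * m + (i0 + i) + 1.
Proof.
  intros k m r. induction r as [|r IH]; intros i0 i a Hi Ha; [lia|].
  rewrite Sseq_S. destruct i as [|i].
  - rewrite app_nth1 by (rewrite round_len; lia). rewrite round_nth by auto. f_equal. lia.
  - rewrite app_nth2 by (rewrite round_len; nia). rewrite round_len.
    replace (S i * k + a - k) with (i * k + a) by nia. rewrite IH by lia. f_equal. lia.
Qed.

Lemma Sseq_nth' : forall k m t, 1 <= k -> t < k * m -> nth t (Sseq k m 0 m) 0 = (t mod k) * m + t / k + 1.
Proof.
  intros k m t Hk Ht. assert (E := Nat.div_mod t k ltac:(lia)).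
  assert (t / k < m) by (apply Nat.Div0.div_lt_upper_bound; lia).
  assert (t mod k < k) by (apply Nat.mod_upper_bound; lia).
  rewrite E at 1. rewrite Nat.mul_comm. rewrite Sseq_nth by auto. lia.
Qed.

Lemma Sseq_in : forall k m r i0 x, In x (Sseq k m i0 r) -> exists a i, a < k /\ i0 <= i < i0 + r /\ x = a * m + i + 1.
Proof.
  intros k m r i0 x H. unfold Sseq in H. apply in_flat_map in H as [i [Hi H]]. unfold round in H.
  apply in_map_iff in H as [a [<- Ha]]. apply in_seq in Hi, Ha. exists a, i. repeat split; lia.
Qed.

Lemma Sseq_kmono : forall k m, 1 <= k -> k_monotone k (Sseq k m 0 m).
Proof.
  intros k m Hk. exists (fun t => t mod k). split.
  - intros i _. apply Nat.mod_upper_bound; lia.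
  - left. intros i j Hij Hc. rewrite Sseq_len in Hij. rewrite !Sseq_nth' by lia.
    assert (i / k <= j / k) by (apply Nat.Div0.div_le_mono; lia).
    assert (i / k <> j / k).
    { intros E. pose proof (Nat.div_mod i k ltac:(lia)). pose proof (Nat.div_mod j k ltac:(lia)). lia. }
    rewrite Hc. lia.
Qed.

Lemma min_exists : forall P : nat -> Prop, (exists c, P c) -> exists v, P v /\ forall c, P c -> v <= c.
Proof.
  intros P [c Hc]. revert Hc. induction c as [c IH] using (well_founded_induction lt_wf). intros Hc.
  destruct (classic (exists c', P c' /\ c' < c)) as [[c' [H1 H2]]|Hn].
  - exact (IH c' H2 H1).
  - exists c. split; auto. intros c' Hc'. destruct (Nat.le_gt_cases c c'); auto. exfalso; apply Hn; eauto.
Qed.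

Lemma pow_bound : forall k, 2 * k * k <= 2 ^ (2 * k).
Proof.
  induction k; [simpl; lia|]. replace (2 * S k) with (S (S (2 * k))) by lia. rewrite !Nat.pow_succ_r'.
  assert (1 <= 2 ^ (2 * k)) by (apply Nat.neq_0_lt_0, Nat.pow_nonzero; lia).
  destruct k; [simpl; lia|]. nia.
Qed.

Lemma arith_main : forall k q, 2 <= k -> k <= q ->
  q * 2 ^ (4 * q) <= (2 * q) * (2 ^ (4 * q) - k * k * 2 ^ (2 * q)).
Proof.
  intros k q Hk Hq. set (X := 2 ^ (2 * q)).
  assert (EX : 2 ^ (4 * q) = X * X) by (unfold X; rewrite <- Nat.pow_add_r; f_equal; lia).
  rewrite EX.
  assert (H1 : 2 * k * k <= X) by (eapply Nat.le_trans; [apply pow_bound|]; apply Nat.pow_le_mono_r; lia).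
  assert (H2 : 2 * (k * k * X) <= X * X) by nia.
  assert (H3 : X * X <= 2 * (X * X - k * k * X)) by lia.
  replace (2 * q * (X * X - k * k * X)) with (q * (2 * (X * X - k * k * X))) by ring.
  apply Nat.mul_le_mono_l. auto.
Qed.

Open Scope R_scope.

Theorem theorem12 :
  exists c C : R, 0 < c /\ 0 < C /\
  forall k : nat, (2 <= k)%nat ->
  forall N : nat, exists n : nat, (N <= n)%nat /\
    exists S : list nat,
      length S = n /\ (forall x, In x S -> (1 <= x <= n)%nat) /\
      k_monotone k S /\
      (exists v, is_Fk n (k - 1) S v /\
         c * (INR n / INR k) * plog (INR n / INR k) <= INR v) /\
      (exists v, is_Fk n k S v /\ INR v <= C * INR n).
Proof.
  exists (1/4), 2. split; [lra|]. split; [lra|].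
  intros k Hk N. set (q := (k + N)%nat). set (m := (2 ^ (4 * q))%nat).
  assert (Hm : (4 * q < m)%nat) by (apply Nat.pow_gt_lin_r; lia).
  exists (k * m)%nat. split; [nia|]. exists (Sseq k m 0 m). split; [rewrite Sseq_len; lia|]. split.
  { intros x Hx. apply Sseq_in in Hx as [a [i [Ha [Hi ->]]]]. split; [lia|]. nia. }
  split; [apply Sseq_kmono; lia|]. split.
  - destruct (min_exists (attainable (k * m) (k - 1) (Sseq k m 0 m))) as [v [Hv Hmin]].
    { exists (finger_cost (ptree 1 (k * m)) (fun i => nth i (repeat 1%nat (k - 1)) O) (repeat 0%nat (k * m)) (Sseq k m 0 m)).
      exists (ptree 1 (k * m)), (repeat 1%nat (k - 1)), (repeat 0%nat (k * m)).
      split; [unfold is_BST_on; apply ptree_inorder|]. split; [|reflexivity].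
      split; [apply repeat_length|]. split.
      - intros p Hp. apply repeat_spec in Hp. nia.
      - split. rewrite repeat_length, Sseq_len. lia. intros i Hi. apply repeat_spec in Hi. lia. }
    exists v. split; [split; auto|].
    pose proof (lower_bound k m (2 * q) v Hk Hv) as LB.
    pose proof (arith_main k q Hk ltac:(unfold q; lia)) as AM. fold m in AM.
    assert (Hv' : (q * m <= v)%nat) by lia.
    apply le_INR in Hv'. rewrite mult_INR in Hv'.
    assert (Hk0 : 0 < INR k) by (apply lt_0_INR; lia).
    replace (INR (k * m) / INR k) with (INR m) by (rewrite mult_INR; field; lra).
    assert (Hpl : plog (INR m) = INR (4 * q)).
    { unfold plog. assert (H2 : 2 <= INR m) by (replace 2 with (INR 2) by (simpl; lra); apply le_INR; lia).
      rewrite Rmax_right by auto. unfold m. rewrite pow_INR. replace (INR 2) with 2 by (simpl; lra).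
      rewrite ln_pow by lra. pose proof ln_lt_2. field. lra. }
    rewrite Hpl. rewrite mult_INR. replace (INR 4) with 4 by (simpl; lra). nra.
  - destruct (min_exists (attainable (k * m) k (Sseq k m 0 m))) as [v [Hv Hmin]].
    { eexists. apply upper_att; lia. }
    exists v. split; [split; auto|].
    assert (Hle : (v <= 2 * (k * m))%nat).
    { eapply Nat.le_trans. apply Hmin. apply upper_att; lia. apply upper_cost; lia. }
    apply le_INR in Hle. rewrite mult_INR in Hle. replace (INR 2) with 2 in Hle by (simpl; lra). lra.
Qed.
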